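(* Let $K=K_1\times\cdots\times K_n$ be a product of CM fields, let $\alpha=(\alpha_1,\dots,\alpha_n)\in K$, and let $g_i\in\mathbb{Z}[x]$ be the minimal polynomial of $\alpha_i+\overline{\alpha}_i$. Then $\alpha$ is a Weil generator for $K$ if and only if (i) each $\alpha_i$ is a Weil generator for $K_i$, (ii) $\alpha_1\overline{\alpha}_1=\cdots=\alpha_n\overline{\alpha}_n$, and (iii) $|\operatorname{Res}(g_i,g_j)|=1$ for all $i\neq j$.
   Context: For a product of CM fields $K=K_1\times\cdots\times K_n$ (with componentwise CM involution $\overline{\cdot}$), an element $\alpha\in K$ is a Weil generator for $K$ if $\alpha\overline{\alpha}$ lies in the image of the diagonal embedding $\mathbb{Z}\to K$ and $\mathbb{Z}[\alpha,\overline{\alpha}]=\mathcal{O}_K:=\prod_i\mathcal{O}_{K_i}$. $\operatorname{Res}$ denotes the resultant. *)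

(* Defs.v *)
From HB Require Import structures.
From mathcomp Require Import all_boot all_order all_algebra all_field.
Set Implicit Arguments. Unset Strict Implicit. Unset Printing Implicit Defensive.
Import Order.TTheory GRing.Theory Num.Theory.
Local Open Scope ring_scope.

Definition totally_real (K : fieldExtType rat) (F : {subfield K}) : Prop :=
  forall (s : {rmorphism K -> algC}) (x : K), x \in F -> s x \is Num.real.

Definition totally_imaginary (K : fieldExtType rat) : Prop :=
  forall s : {rmorphism K -> algC}, exists x : K, s x \isn't Num.real.

(* K is a CM field with CM involution c: K is a totally imaginary quadratic
   extension of a totally real subfield F, and c is the nontrivial
   automorphism of K over F (unique, since [K:F] = 2). *)
Definition CM_field (K : fieldExtType rat) (c : {rmorphism K -> K}) : Prop :=
  exists F : {subfield K},
    [/\ \dim {:K} = (2 * \dim F)%N, totally_real F, totally_imaginary K,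
        (forall x, x \in F -> c x = x) & exists x, c x != x].

Definition integral (K : fieldExtType rat) (x : K) : Prop :=
  exists p : {poly int}, p \is monic /\ root (map_poly intr p) x.

Definition eval2 (R : nzRingType) (P : {poly {poly int}}) (x y : R) : R :=
  \sum_(i < size P) \sum_(j < size P`_i) (P`_i`_j)%:~R * x ^+ i * y ^+ j.

Definition weil_gen (K : fieldExtType rat) (c : {rmorphism K -> K}) (a : K) : Prop :=
  (exists m : int, a * c a = m%:~R) /\
  (forall b : K, integral b <-> exists P : {poly {poly int}}, b = eval2 P a (c a)).

(* Weil generator for the product K = K_0 x ... x K_{n-1}, operations
   componentwise; O_K = prod O_{K_i}; Z[a, conj a] = { P(a, conj a) }. *)
Definition weil_gen_prod (n : nat) (K : 'I_n -> fieldExtType rat)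
    (c : forall i, {rmorphism K i -> K i}) (a : forall i, K i) : Prop :=
  (exists m : int, forall i, a i * c i (a i) = m%:~R) /\
  (forall b : forall i, K i, (forall i, integral (b i)) <->
     exists P : {poly {poly int}}, forall i, b i = eval2 P (a i) (c i (a i))).

(* g is the minimal polynomial of x in Z[x]: the primitive integer polynomial
   with positive leading coefficient proportional to the minimal polynomial
   of x over Q. *)
Definition int_minpoly (K : fieldExtType rat) (x : K) (g : {poly int}) : Prop :=
  zcontents g = 1 /\ map_poly intr g = (lead_coef g)%:~R *: minPoly 1%AS x.

(* Main.v *)
Require Import Defs.
From HB Require Import structures.
From mathcomp Require Import all_boot all_order all_algebra all_field.
From mathcomp Require Import ring zify.
Import Order.TTheory GRing.Theory Num.Theory.
Local Open Scope ring_scope.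
Set Implicit Arguments. Unset Strict Implicit. Unset Printing Implicit Defensive.

Definition ev (R : comNzRingType) (z : R) : {rmorphism {poly int} -> R} :=
  (horner_eval z \o map_poly intr)%FUN.

Lemma evE (R : comNzRingType) (z : R) A : ev z A = (map_poly intr A).[z].
Proof. by rewrite /= horner_evalE. Qed.

Lemma evX (R : comNzRingType) (z : R) : ev z 'X = z.
Proof. by rewrite evE map_polyX hornerX. Qed.

Lemma evC (R : comNzRingType) (z : R) c : ev z c%:P = c%:~R.
Proof. by rewrite evE map_polyC hornerC. Qed.

Lemma size_map_le (aR rR : nzSemiRingType) (f : aR -> rR) (p : {poly aR}) :
  (size (map_poly f p) <= size p)%N.
Proof. by rewrite /map_poly; apply: size_poly. Qed.

Definition E2 (R : comNzRingType) (x y : R) : {rmorphism {poly {poly int}} -> R} :=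
  (horner_eval x \o map_poly (ev y))%FUN.

Lemma eval2E (R : comNzRingType) (P : {poly {poly int}}) (x y : R) :
  eval2 P x y = E2 x y P.
Proof.
rewrite /eval2 /= horner_evalE (horner_coef_wide _ (size_map_le _ _)).
apply: eq_bigr => i _; rewrite coef_map /= horner_evalE.
rewrite (horner_coef_wide _ (size_map_le _ _)) mulr_suml.
by apply: eq_bigr => j _; rewrite coef_map /= mulrAC.
Qed.

Lemma E2X (R : comNzRingType) (x y : R) : E2 x y 'X = x.
Proof. by rewrite /= map_polyX horner_evalE hornerX. Qed.

Lemma E2Y (R : comNzRingType) (x y : R) : E2 x y ('X)%:P = y.
Proof. by rewrite /= map_polyC horner_evalE hornerC -[X in _ = X](evX y). Qed.

Lemma E2C (R : comNzRingType) (x y : R) c : E2 x y (c%:P%:P) = c%:~R.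
Proof. by rewrite /= map_polyC horner_evalE hornerC -[X in _ = X](evC y). Qed.

Definition liftXY (h : {poly int}) : {poly {poly int}} :=
  (map_poly (fun c : int => c%:P%:P) h).[ 'X + ('X)%:P ].

Lemma E2lift (R : comNzRingType) (x y : R) h : E2 x y (liftXY h) = ev (x + y) h.
Proof.
rewrite /liftXY -horner_map rmorphD E2X E2Y evE.
congr (_.[_]); rewrite -map_poly_comp; apply: eq_map_poly => c /=.
by rewrite map_polyC horner_evalE hornerC -[X in _ = X](evC y).
Qed.

Lemma eval2_morph (R S : comNzRingType) (f : {rmorphism R -> S}) P x y :
  f (eval2 P x y) = eval2 P (f x) (f y).
Proof.
rewrite /eval2 rmorph_sum; apply: eq_bigr => i _; rewrite rmorph_sum.
by apply: eq_bigr => j _; rewrite !rmorphM rmorph_int !rmorphXn.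
Qed.

Lemma ev_morph (R S : comNzRingType) (f : {rmorphism R -> S}) A z :
  f (ev z A) = ev (f z) A.
Proof.
rewrite !evE -horner_map -map_poly_comp; congr (_.[_]).
by apply: eq_map_poly => c /=; rewrite rmorph_int.
Qed.

Lemma integral_int (K : fieldExtType rat) (z : int) : integral (z%:~R : K).
Proof.
exists ('X - z%:P); split; first exact: monicXsubC.
by rewrite rmorphB /= map_polyX map_polyC root_XsubC.
Qed.

Lemma intrK_inj (K : fieldExtType rat) : injective (intr : int -> K).
Proof.
move=> x y; rewrite -[x%:~R](rmorph_int (in_alg K)) -[y%:~R](rmorph_int (in_alg K)).
by move/fmorph_inj/intr_inj.
Qed.


Lemma intrK_eq0 (K : fieldExtType rat) (z : int) : ((z%:~R : K) == 0) = (z == 0).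
Proof. by rewrite -(rmorph_int (in_alg K)) fmorph_eq0 intr_eq0. Qed.

Lemma polyOver_int (K : fieldExtType rat) (p : {poly int}) :
  map_poly (intr : int -> K) p \is a polyOver 1%VS.
Proof.
apply/polyOver1P; exists (map_poly intr p); rewrite -map_poly_comp.
by apply: eq_map_poly => c; exact: (esym (rmorph_int (in_alg K) c)).
Qed.

Lemma size_mapK (K : fieldExtType rat) (p : {poly int}) :
  size (map_poly (intr : int -> K) p) = size p.
Proof. by apply: size_map_inj_poly; [exact: intrK_inj | exact: mulr0z]. Qed.

Lemma mapK_rat (K : fieldExtType rat) (p : {poly int}) :
  map_poly (intr : int -> K) p = map_poly (in_alg K) (map_poly intr p).
Proof.
rewrite -map_poly_comp; apply: eq_map_poly => c; exact: (esym (rmorph_int (in_alg K) c)).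
Qed.

Lemma intmin_ne0 (K : fieldExtType rat) (x : K) g : int_minpoly x g -> g != 0.
Proof. by move=> [hz _]; apply/eqP => g0; move: hz; rewrite g0 zcontents0. Qed.

Lemma intmin_monic (K : fieldExtType rat) (x : K) g :
  int_minpoly x g -> integral x -> g \is monic.
Proof.
move=> hg [p [pm hr]]; have [hz hm] := hg; have g0 := intmin_ne0 hg.
have lc0 : lead_coef g != 0 by rewrite lead_coef_eq0.
have lcK : (lead_coef g)%:~R != 0 :> K by rewrite intrK_eq0.
have dv : minPoly 1 x %| (map_poly intr p) := minPoly_dvdp (polyOver_int _ _) hr.
have dv2 : (map_poly intr g) %| ((map_poly intr p) : {poly K}) by rewrite hm dvdpZl.
rewrite !mapK_rat dvdp_map dvdp_rat_int in dv2.
have [r hp] := dvdpP_int dv2.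
have pg : zprimitive g = g by rewrite {2}(zpolyEprim g) hz scale1r.
rewrite pg in hp.
have := pm; rewrite monicE hp lead_coefM => /eqP h1.
have pos : 0 < lead_coef g.
  by have := sgz_contents g; rewrite hz => /esym/eqP; rewrite sgz_cp0.
rewrite monicE; apply/eqP; move: h1 pos.
set l := lead_coef g; set s := lead_coef r => h1 pos.
have sp : 0 < s by rewrite -(pmulr_rgt0 _ pos) h1.
have : l <= l * s by rewrite ler_peMr // ?ltW //; lia.
lia.
Qed.

Lemma intmin_root (K : fieldExtType rat) (x : K) g :
  int_minpoly x g -> g \is monic -> (map_poly intr g) = minPoly 1 x.
Proof. by move=> [_ hm] gm; rewrite hm (eqP gm) scale1r. Qed.

Lemma intmin_dvd (K : fieldExtType rat) (x : K) g h :
  int_minpoly x g -> g \is monic -> root ((map_poly intr h)) x -> exists q, h = q * g.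
Proof.
move=> hg gm hr; have hm' := intmin_root hg gm.
have hdiv := Pdiv.IdomainMonic.divp_eq gm h.
set r := h %% g in hdiv *.
suff r0 : r = 0 by exists (h %/ g); rewrite {1}hdiv r0 addr0.
have rg : root ((map_poly intr g)) x by rewrite hm' root_minPoly.
have er : r = h - h %/ g * g by rewrite {1}hdiv addrAC subrr add0r.
have rr : root ((map_poly intr r)) x.
  by rewrite /root in hr rg *; rewrite er rmorphB rmorphM /= !hornerE (eqP hr) (eqP rg) mulr0 subr0.
have szr : (size r < size g)%N by apply: ltn_modpN0 (monic_neq0 gm).
apply/eqP/negPn/negP => rn0.
have mn0 : (map_poly intr r) != 0 :> {poly K} by rewrite -size_poly_eq0 size_mapK size_poly_eq0.
have := dvdp_leq mn0 (minPoly_dvdp (polyOver_int _ r) rr).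
by rewrite -hm' !size_mapK leqNgt szr.
Qed.


Lemma int_root_integral (K : fieldExtType rat) (q : {poly int}) (x : K) :
  q != 0 -> root (map_poly intr q) x -> integral ((lead_coef q)%:~R * x).
Proof.
move=> q0 hr.
have [d' szq] : exists d', size q = d'.+2.
  case E: (size q) => [|[|d']]; last by exists d'.
  - by move/eqP: E; rewrite size_poly_eq0 (negPf q0).
  - have := size1_polyC (eqbLR (esym (congr1 (leq^~ 1%N) E)) isT) => qC.
    move: hr; rewrite qC map_polyC rootC intrK_eq0 => /eqP q00.
    by move: q0; rewrite qC q00 eqxx.
set L := lead_coef q.
have qd : q`_d'.+1 = L by rewrite /L lead_coefE szq.
pose r := \poly_(i < d'.+2) (if i == d'.+1 then 1 else q`_i * L ^+ (d' - i)).
exists r; split.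
  by rewrite monicE /r lead_coef_poly //= eqxx.
have szr : (size (map_poly (intr : int -> K) r) <= d'.+2)%N.
  exact: leq_trans (size_map_le _ _) (size_poly _ _).
have szq' : (size (map_poly (intr : int -> K) q) <= d'.+2)%N.
  by rewrite size_mapK szq.
move: hr; rewrite /root (horner_coef_wide _ szr) (horner_coef_wide _ szq') => /eqP hr.
apply/eqP; transitivity ((L%:~R : K) ^+ d' * \sum_(i < d'.+2) (map_poly intr q)`_i * x ^+ i);
  last by rewrite hr mulr0.
rewrite mulr_sumr.
apply: eq_bigr => i _; rewrite !coef_map /= coef_poly ltn_ord.
case: eqP => [->|ne].
  rewrite qd exprMn rmorph1 mul1r exprSr; ring.
have id : (i <= d')%N by move: (ltn_ord i) ne; rewrite ltnS leq_eqVlt => /orP[/eqP->|] //.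
rewrite rmorphM rmorphXn exprMn.
have e : (L%:~R : K) ^+ d' = L%:~R ^+ (d' - i) * L%:~R ^+ i by rewrite -exprD subnK.
rewrite e; ring.
Qed.

Lemma denom (K : fieldExtType rat) (x : K) :
  exists d : int, d != 0 /\ integral (d%:~R * x).
Proof.
have /polyOver1P [q0 hq0] := minPolyOver 1%AS x.
have [q [a a0 hq]] := rat_poly_scale q0.
have hq' : map_poly intr q = a%:~R *: q0.
  by rewrite hq scalerA mulfV ?scale1r // intr_eq0.
have q0n : q0 != 0.
  by apply/eqP => e; move: (monic_neq0 (monic_minPoly 1%AS x)); rewrite hq0 e map_poly0 eqxx.
have qn : q != 0.
  apply/eqP => e; move: hq'; rewrite e map_poly0 => /esym/eqP.
  by rewrite scaler_eq0 intr_eq0 (negPf a0) (negPf q0n).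
exists (lead_coef q); split; first by rewrite lead_coef_eq0.
apply: int_root_integral => //.
rewrite mapK_rat hq' map_polyZ rootZ ?root_minPoly -?hq0 ?root_minPoly //.
by rewrite fmorph_eq0 intr_eq0.
Qed.

Lemma map_res (aR rR : nzRingType) (f : {rmorphism aR -> rR}) (p q : {poly aR}) :
    f (lead_coef p) != 0 -> f (lead_coef q) != 0 ->
  f (resultant p q) = resultant (map_poly f p) (map_poly f q).
Proof.
move=> nz_fp nz_fq; rewrite /resultant /Sylvester_mx !size_map_poly_id0 //.
rewrite -det_map_mx /= map_col_mx; congr (\det (col_mx _ _));
  by apply: map_lin1_mx => v; rewrite map_poly_rV rmorphM /= map_rVpoly.
Qed.

Lemma res_unit (f h u v : {poly int}) :
  f \is monic -> h \is monic -> u * f + v * h = 1 -> `|resultant f h| = 1.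
Proof.
move=> fm hm e; set z := resultant f h.
suff : (`|z|%N == 1)%N by move/eqP => h1; rewrite -abszE h1.
apply/negPn/negP => n1.
have [p pp pdz] : exists2 p, prime p & (p %| `|z|%N)%N.
  case: (posnP `|z|%N) => [->|zpos]; first by exists 2%N.
  exists (pdiv `|z|%N); [apply: pdiv_prime | apply: pdiv_dvd].
  by rewrite ltn_neqAle eq_sym n1 zpos.
have Fz : (z%:~R : 'F_p) = 0.
  rewrite [z]intEsign rmorphM /=; apply/eqP; rewrite mulf_eq0; apply/orP; right.
  have [k ->] := dvdnP pdz.
  by rewrite -pmulrn natrM pchar_Fp_0 // mulr0.
have := @map_res _ _ (intr : int -> 'F_p) f h.
rewrite (eqP fm) (eqP hm) rmorph1 oner_neq0 => /(_ isT isT).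
move=> H; have /eqP : resultant (map_poly intr f) (map_poly intr h) = 0 :> 'F_p by rewrite -H; exact: Fz.
rewrite resultant_eq0 => hg.
have : coprimep (map_poly (intr : int -> 'F_p) f) (map_poly intr h).
  apply/(@Bezout_coprimepP 'F_p); exists (map_poly intr u, map_poly intr v) => /=.
  have := congr1 (map_poly (intr : int -> 'F_p)) e.
  by rewrite rmorphD !rmorphM rmorph1 => ->; exact: eqpxx.
by rewrite coprimep_def => /eqP hs; rewrite hs in hg.
Qed.


Definition dsingle (n : nat) (K : 'I_n -> fieldExtType rat) (i : 'I_n) (b : K i) :
  forall k, K k :=
  fun k => match k =P i with
           | ReflectT e => ecast z (K z) (esym e) b
           | ReflectF _ => 0 end.

Lemma dsingle_id (n : nat) (K : 'I_n -> fieldExtType rat) (i : 'I_n) (b : K i) :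
  dsingle b i = b.
Proof. by rewrite /dsingle; case: eqP => // e; rewrite (eq_axiomK e). Qed.

Lemma dsingle_ne (n : nat) (K : 'I_n -> fieldExtType rat) (i : 'I_n) (b : K i) k :
  k != i -> dsingle b k = 0.
Proof. by rewrite /dsingle; case: eqP => // ->; rewrite eqxx. Qed.

Lemma dsingle1 (n : nat) (K : 'I_n -> fieldExtType rat) (i : 'I_n) k :
  dsingle (1 : K i) k = (k == i)%:R.
Proof.
case: (eqVneq k i) => [->|ne]; first by rewrite dsingle_id.
by rewrite dsingle_ne.
Qed.

Lemma integral_zero (K : fieldExtType rat) : integral (0 : K).
Proof. by have := integral_int K 0; rewrite mulr0z. Qed.

Lemma integral_one (K : fieldExtType rat) : integral (1 : K).
Proof. by have := integral_int K 1. Qed.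

Lemma dsingle_integral (n : nat) (K : 'I_n -> fieldExtType rat) (i : 'I_n) (b : K i) :
  integral b -> forall k, integral (dsingle b k).
Proof.
move=> hb k; case: (eqVneq k i) => [->|ne]; first by rewrite dsingle_id.
by rewrite dsingle_ne //; apply: integral_zero.
Qed.

Definition goodf (n : nat) (K : 'I_n -> fieldExtType rat)
    (c : forall i, {rmorphism K i -> K i}) (a : forall i, K i) (f : forall k, K k) :=
  exists A B : {poly int}, forall k,
    f k = ev (a k + c k (a k)) A + ev (a k + c k (a k)) B * a k.

Lemma good_ext (n : nat) (K : 'I_n -> fieldExtType rat)
    (c : forall i, {rmorphism K i -> K i}) (a : forall i, K i) (f g : forall k, K k) :
  (forall k, f k = g k) -> goodf c a f -> goodf c a g.
Proof. by move=> e [A [B h]]; exists A, B => k; rewrite -e h. Qed.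

Lemma good_int (n : nat) (K : 'I_n -> fieldExtType rat)
    (c : forall i, {rmorphism K i -> K i}) (a : forall i, K i) (z : int) :
  goodf c a (fun k => z%:~R).
Proof. by exists z%:P, 0 => k; rewrite evC rmorph0 mul0r addr0. Qed.

Lemma good_a (n : nat) (K : 'I_n -> fieldExtType rat)
    (c : forall i, {rmorphism K i -> K i}) (a : forall i, K i) :
  goodf c a a.
Proof. by exists 0, 1 => k; rewrite rmorph0 rmorph1 add0r mul1r. Qed.

Lemma good_ca (n : nat) (K : 'I_n -> fieldExtType rat)
    (c : forall i, {rmorphism K i -> K i}) (a : forall i, K i) :
  goodf c a (fun k => c k (a k)).
Proof.
exists 'X, (-1) => k; rewrite evX rmorphN rmorph1; ring.
Qed.

Lemma good_add (n : nat) (K : 'I_n -> fieldExtType rat)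
    (c : forall i, {rmorphism K i -> K i}) (a : forall i, K i) (f g : forall k, K k) :
  goodf c a f -> goodf c a g -> goodf c a (fun k => f k + g k).
Proof.
move=> [A1 [B1 h1]] [A2 [B2 h2]]; exists (A1 + A2), (B1 + B2) => k.
rewrite h1 h2 !rmorphD; ring.
Qed.

Lemma good_mul (n : nat) (K : 'I_n -> fieldExtType rat)
    (c : forall i, {rmorphism K i -> K i}) (a : forall i, K i) (m : int)
    (hm : forall k, a k * c k (a k) = m%:~R) (f g : forall k, K k) :
  goodf c a f -> goodf c a g -> goodf c a (fun k => f k * g k).
Proof.
move=> [A1 [B1 h1]] [A2 [B2 h2]].
exists (A1 * A2 - m%:P * B1 * B2), (A1 * B2 + A2 * B1 + 'X * B1 * B2) => k.
rewrite h1 h2 !rmorphD ?rmorphN !rmorphM evC evX -hm; ring.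
Qed.

Lemma good_exp (n : nat) (K : 'I_n -> fieldExtType rat)
    (c : forall i, {rmorphism K i -> K i}) (a : forall i, K i) (m : int)
    (hm : forall k, a k * c k (a k) = m%:~R) (f : forall k, K k) e :
  goodf c a f -> goodf c a (fun k => f k ^+ e).
Proof.
move=> hf; elim: e => [|e IH].
  by apply: (good_ext _ (good_int c a 1)) => k; rewrite expr0.
by apply: (good_ext _ (good_mul hm IH hf)) => k; rewrite exprSr.
Qed.

Lemma good_sum (n : nat) (K : 'I_n -> fieldExtType rat)
    (c : forall i, {rmorphism K i -> K i}) (a : forall i, K i) N
    (F : 'I_N -> forall k, K k) :
  (forall i, goodf c a (F i)) -> goodf c a (fun k => \sum_(i < N) F i k).
Proof.
elim: N F => [|N IH] F hF.
  by apply: (good_ext _ (good_int c a 0)) => k; rewrite big_ord0.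
have := good_add (IH (fun i => F (widen_ord (leqnSn N) i)) (fun i => hF _)) (hF ord_max).
by apply: good_ext => k; rewrite big_ord_recr.
Qed.

Lemma good_eval2 (n : nat) (K : 'I_n -> fieldExtType rat)
    (c : forall i, {rmorphism K i -> K i}) (a : forall i, K i) (m : int)
    (hm : forall k, a k * c k (a k) = m%:~R) P :
  goodf c a (fun k => eval2 P (a k) (c k (a k))).
Proof.
apply: good_sum => i; apply: good_sum => j.
apply: (@good_mul _ _ c a m hm (fun k => (P`_i`_j)%:~R * a k ^+ i) (fun k => c k (a k) ^+ j)).
  apply: (@good_mul _ _ c a m hm (fun k => (P`_i`_j)%:~R) (fun k => a k ^+ i)).
    exact: good_int.
  exact: (@good_exp _ _ c a m hm a i (good_a c a)).
exact: (@good_exp _ _ c a m hm (fun k => c k (a k)) j (good_ca c a)).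
Qed.


Lemma pi_integral (n : nat) (K : 'I_n -> fieldExtType rat)
    (c : forall i, {rmorphism K i -> K i}) (a : forall i, K i) :
  weil_gen_prod c a -> forall k, integral (a k + c k (a k)).
Proof.
move=> [_ hiff] k.
have : forall k, integral (eval2 ('X + ('X)%:P) (a k) (c k (a k))).
  by apply: (proj2 (hiff (fun k => eval2 ('X + ('X)%:P) (a k) (c k (a k))))); exists ('X + ('X)%:P).
move/(_ k).
by rewrite eval2E rmorphD E2X E2Y.
Qed.

Lemma nonfixed (K : fieldExtType rat) (c : {rmorphism K -> K}) :
  CM_field c -> exists z : K, integral z /\ c z != z.
Proof.
move=> [F [_ _ _ _ [x hx]]]; have [d [d0 hd]] := denom x.
exists (d%:~R * x); split => //; rewrite rmorphM rmorph_int.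
apply: contra hx => /eqP h.
have : d%:~R * (c x - x) = 0 by rewrite mulrBr h subrr.
by move/eqP; rewrite mulf_eq0 intrK_eq0 (negPf d0) /= subr_eq0.
Qed.

Lemma a_nonfixed (n : nat) (K : 'I_n -> fieldExtType rat)
    (c : forall i, {rmorphism K i -> K i}) (a : forall i, K i) :
  weil_gen_prod c a -> (forall i, CM_field (c i)) -> forall k, a k != c k (a k).
Proof.
move=> [_ hiff] hCM k; have [z [zi zc]] := nonfixed (hCM k).
have [P hP] := proj1 (hiff (dsingle z)) (dsingle_integral zi).
have := hP k; rewrite dsingle_id => hz.
apply/negP => /eqP e; move: zc; rewrite hz eval2_morph -!e eqxx.
by [].
Qed.

Lemma cc_fix (K : fieldExtType rat) (c : {rmorphism K -> K}) (x : K) (m : int) :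
  x * c x = m%:~R -> x != c x -> c (c x) = x.
Proof.
move=> hm hx.
have cx0 : c x != 0.
  apply: contra hx => /eqP h0; apply/eqP; rewrite h0.
  by apply: (fmorph_inj c); rewrite h0 rmorph0.
have : c x * c (c x) = c x * x by rewrite -rmorphM hm rmorph_int -hm mulrC.
exact: mulfI.
Qed.

Lemma dir_iii (n : nat) (K : 'I_n -> fieldExtType rat)
    (c : forall i, {rmorphism K i -> K i})
    (hCM : forall i, CM_field (c i))
    (a : forall i, K i) (g : 'I_n -> {poly int})
    (hg : forall i, int_minpoly (a i + c i (a i)) (g i)) :
  weil_gen_prod c a -> forall i j, i != j -> `|resultant (g i) (g j)| = 1.
Proof.
move=> W i j ij; have [[m hm] hiff] := W.
have gm : forall k, g k \is monic := fun k => intmin_monic (hg k) (pi_integral W k).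
have anf := a_nonfixed W hCM.
have cpi : forall k, c k (a k + c k (a k)) = a k + c k (a k).
  by move=> k; rewrite rmorphD (cc_fix (hm k) (anf k)) addrC.
have [P hP] := proj1 (hiff (dsingle (1 : K i))) (dsingle_integral (integral_one _)).
have [A [B hAB]] := good_eval2 hm P.
have key : forall k, ev (a k + c k (a k)) A = (k == i)%:R /\ ev (a k + c k (a k)) B = 0.
  move=> k; have e1 := hP k; rewrite dsingle1 hAB in e1.
  have e2 := congr1 (c k) e1; rewrite rmorph_nat rmorphD rmorphM !ev_morph cpi in e2.
  rewrite e1 in e2; move/addrI: e2 => e2.
  have B0 : ev (a k + c k (a k)) B = 0.
    have : ev (a k + c k (a k)) B * (a k - c k (a k)) = 0 by rewrite mulrBr e2 subrr.
    by move/eqP; rewrite mulf_eq0 subr_eq0 (negPf (anf k)) orbF => /eqP.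
  by split => //; rewrite e1 B0 mul0r addr0.
have rA : root (map_poly intr A) (a j + c j (a j)).
  have ji : (j == i) = false by rewrite eq_sym (negPf ij).
  by rewrite /root -evE (proj1 (key j)) ji.
have r1A : root (map_poly intr (1 - A)) (a i + c i (a i)).
  by rewrite /root -evE rmorphB rmorph1 (proj1 (key i)) eqxx subrr.
have [q1 h1] := intmin_dvd (hg j) (gm j) rA.
have [q2 h2] := intmin_dvd (hg i) (gm i) r1A.
apply: (res_unit (u := q2) (v := q1)) => //.
by rewrite -h1 -h2 subrK.
Qed.


Lemma intmin_root0 (K : fieldExtType rat) (x : K) g :
  int_minpoly x g -> ev x g = 0.
Proof.
move=> hg; have [_ hm] := hg; rewrite evE hm hornerZ.
by have /rootP -> := root_minPoly 1%AS x; rewrite mulr0.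
Qed.

Lemma intmin_size (K : fieldExtType rat) (x : K) g :
  int_minpoly x g -> (1 < size g)%N.
Proof.
move=> hg; rewrite -(size_mapK K); apply: (root_size_gt1 (a := x)).
  by rewrite -size_poly_eq0 size_mapK size_poly_eq0 (intmin_ne0 hg).
by rewrite /root -evE (intmin_root0 hg).
Qed.

Lemma dir2 (n : nat) (K : 'I_n -> fieldExtType rat)
    (c : forall i, {rmorphism K i -> K i})
    (a : forall i, K i) (g : 'I_n -> {poly int})
    (hg : forall i, int_minpoly (a i + c i (a i)) (g i)) :
  (forall i, weil_gen (c i) (a i)) ->
  (exists m : int, forall i, a i * c i (a i) = m%:~R) ->
  (forall i j, i != j -> `|resultant (g i) (g j)| = 1) ->
  weil_gen_prod c a.
Proof.
move=> hW hm hR; split => // b; split; last first.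
  by move=> [P hP] k; rewrite hP; apply: (proj2 (proj2 (hW k) _)); exists P.
move=> hb.
have [Pc hPc] : exists Pc : 'I_n -> {poly {poly int}},
    forall k, b k = eval2 (Pc k) (a k) (c k (a k)).
  apply: (@fin_all_exists _ (fun _ => {poly {poly int}}) (fun k P => b k = eval2 P (a k) (c k (a k)))) => k.
  exact: (proj1 (proj2 (hW k) (b k)) (hb k)).
have hsz := fun k => intmin_size (hg k).
pose U i j := s2val (resultant_in_ideal (hsz i) (hsz j)).
have huv : forall i j, (resultant (g i) (g j))%:P = (U i j).1 * g i + (U i j).2 * g j.
  by move=> i j; exact: (s2valP' (resultant_in_ideal (hsz i) (hsz j))).
pose e i := \prod_(j < n | j != i) ((resultant (g i) (g j))%:P * ((U i j).2 * g j)).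
have he : forall i k, ev (a k + c k (a k)) (e i) = (k == i)%:R.
  move=> i k; rewrite rmorph_prod; case: (eqVneq k i) => [->|ne].
    apply: big1 => j ji.
    have := congr1 (ev (a i + c i (a i))) (huv i j).
    rewrite evC rmorphD !rmorphM (intmin_root0 (hg i)) mulr0 add0r => <-.
    have r1 : resultant (g i) (g j) * resultant (g i) (g j) = 1.
      have := hR i j; rewrite eq_sym ji => /(_ isT) h.
      by rewrite -expr2 -real_normK ?num_real // h expr1n.
    by rewrite evC -intrM r1.
  rewrite (bigD1 k) // !(rmorphM (ev (a k + c k (a k)))) (intmin_root0 (hg k)).
  by rewrite !mulr0 /= mul0r.
exists (\sum_(i < n) liftXY (e i) * Pc i) => k.
rewrite eval2E rmorph_sum (bigD1 k) // big1 ?addr0 => [|i /andP[_ ik]].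
  by rewrite (rmorphM (E2 _ _)) E2lift he eqxx mul1r -eval2E -hPc /= addr0.
by rewrite (rmorphM (E2 _ _)) E2lift he eq_sym (negPf ik) mul0r.
Qed.

Lemma dir1 (n : nat) (K : 'I_n -> fieldExtType rat)
    (c : forall i, {rmorphism K i -> K i}) (a : forall i, K i) :
  weil_gen_prod c a -> forall i, weil_gen (c i) (a i).
Proof.
move=> [[m hm] hiff] i; split; first by exists m.
move=> b; split.
  move=> hb; have [P hP] := proj1 (hiff (dsingle b)) (dsingle_integral hb).
  by exists P; rewrite -hP dsingle_id.
move=> [P ->].
have : forall k, integral (eval2 P (a k) (c k (a k))).
  by apply: (proj2 (hiff (fun k => eval2 P (a k) (c k (a k))))); exists P.
by move/(_ i).
Qed.

Theorem mainTheorem4 (n : nat) (K : 'I_n -> fieldExtType rat)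
    (c : forall i, {rmorphism K i -> K i})
    (hCM : forall i, CM_field (c i))
    (a : forall i, K i) (g : 'I_n -> {poly int})
    (hg : forall i, int_minpoly (a i + c i (a i)) (g i)) :
  weil_gen_prod c a <->
  [/\ forall i, weil_gen (c i) (a i),
      exists m : int, forall i, a i * c i (a i) = m%:~R &
      forall i j, i != j -> `|resultant (g i) (g j)| = 1].
Proof.
split.
  move=> W; split; first exact: dir1.
    by case: W.
  exact: (@dir_iii n K c hCM a g hg W).
by case=> h1 h2 h3; exact: (@dir2 n K c a g hg h1 h2 h3).
Qed.
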